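(* Let $\mathbf w=\mathbf v_1a\mathbf v_2a\mathbf v_3$ where $a$ is a letter and $\mathbf v_1,\mathbf v_2,\mathbf v_3$ are possibly empty words. Suppose that $a$ occurs in $\mathbf v_1$ and that every letter occurring in $\mathbf v_2$ occurs at least twice in $\mathbf w$. Then the variety $\mathbf O$ satisfies the identity $\mathbf w\approx\mathbf v_1\mathbf v_2a\mathbf v_3$.
   Context: Words are elements of the free monoid over a countably infinite alphabet. $\mathbf O$ is the monoid variety defined by the identities $x^2y^2\approx y^2x^2$ and $xzxyxty\approx xzyxty$. *)

(* Defs.v *)
From mathcomp Require Import all_boot.
Set Implicit Arguments. Unset Strict Implicit. Unset Printing Implicit Defensive.

Definition word := seq nat.

Record monoid := Monoid {
  carrier :> Type;
  mop : carrier -> carrier -> carrier;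
  munit : carrier;
  mopA : forall x y z, mop x (mop y z) = mop (mop x y) z;
  mop1x : forall x, mop munit x = x;
  mopx1 : forall x, mop x munit = x }.

Definition eval (M : monoid) (f : nat -> M) (w : word) : M :=
  foldr (fun x acc => mop (f x) acc) (munit M) w.

Definition sat (M : monoid) (u v : word) : Prop :=
  forall f : nat -> M, eval f u = eval f v.

(* Defining identities of O, with x = 0, y = 1, z = 2, t = 3:
   x^2 y^2 ~ y^2 x^2   and   x z x y x t y ~ x z y x t y. *)
Definition in_O (M : monoid) : Prop :=
  sat M [:: 0; 0; 1; 1] [:: 1; 1; 0; 0] /\
  sat M [:: 0; 2; 0; 1; 0; 3; 1] [:: 0; 2; 1; 0; 3; 1].

Definition O_satisfies (u v : word) : Prop :=
  forall M : monoid, in_O M -> sat M u v.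

(* Main.v *)
Require Import Defs.
From mathcomp Require Import all_boot.

Section S.
Variable M : monoid.
Variable f : nat -> M.
Hypothesis HO : in_O M.
Local Notation E := (eval f).

Lemma evalC s t : E (s ++ t) = mop (E s) (E t).
Proof. elim: s => [|x s IH] /=; first by rewrite mop1x. by rewrite IH mopA. Qed.

Lemma evalS x s : E (x :: s) = mop (f x) (E s).
Proof. by []. Qed.

Lemma id1s (x y s : M) :
  mop x (mop x (mop y (mop y s))) = mop y (mop y (mop x (mop x s))).
Proof.
have := congr1 (fun m => mop m s)
  (HO.1 (fun n => match n with 0 => x | _ => y end)).
by rewrite /= -!mopA !mop1x.
Qed.

Lemma id2s (x z y t s : M) :
  mop x (mop z (mop x (mop y (mop x (mop t (mop y s)))))) =
  mop x (mop z (mop y (mop x (mop t (mop y s))))).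
Proof.
have := congr1 (fun m => mop m s)
  (HO.2 (fun n => match n with 0 => x | 1 => y | 2 => z | _ => t end)).
by rewrite /= -!mopA !mop1x.
Qed.

Lemma Lsq p a q : a \in p -> E (p ++ a :: a :: q) = E (p ++ a :: q).
Proof.
case/splitPr => p1 p2.
rewrite -!catA /= !(evalC, evalS); congr (mop _ _).
have := id2s (f a) (E p2) (munit M) (E q) (munit M).
by rewrite !mop1x !mopx1.
Qed.

Lemma Lswap p a y q : a \in p -> y \in p ->
  E (p ++ a :: y :: q) = E (p ++ y :: a :: q).
Proof.
move=> Ha Hy.
rewrite -Lsq //.
have -> : p ++ a :: a :: y :: q = (p ++ [:: a; a]) ++ y :: q by rewrite -catA.
rewrite -Lsq; last by rewrite mem_cat Hy.
rewrite -catA /= evalC !evalS id1s -!evalS -evalC.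
have -> : p ++ [:: y, y, a, a & q] = (p ++ [:: y; y]) ++ a :: a :: q by rewrite -catA.
rewrite Lsq; last by rewrite mem_cat Ha.
by rewrite -catA /= Lsq.
Qed.

Lemma Lins p a y q : a \in p -> y \in q ->
  E (p ++ a :: y :: a :: q) = E (p ++ y :: a :: q).
Proof.
case/splitPr => p1 p2; case/splitPr => q1 q2.
rewrite -!catA /= !(evalC, evalS); congr (mop _ _).
by rewrite id2s.
Qed.

Lemma mainL v2 v1 v3 a : a \in v1 ->
  (forall x, x \in v2 ->
     [|| x \in v1, x == a, x \in v3 | 1 < count_mem x v2]) ->
  E (v1 ++ a :: v2 ++ a :: v3) = E (v1 ++ v2 ++ a :: v3).
Proof.
move=> Ha; elim/last_ind: v2 v3 => [|u y IH] v3 H.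
  by rewrite /= Lsq.
rewrite !cat_rcons.
have Hy : [|| y \in v1, y == a, y \in v3 | 1 < count_mem y (rcons u y)] by apply: H; rewrite mem_rcons mem_head.
have Hu : forall v3' : word, y \in v3' -> {subset v3 <= v3'} -> forall x, x \in u ->
   [|| x \in v1, x == a, x \in v3' | 1 < count_mem x u].
  move=> v3' yv sv x xu; have := H x; rewrite mem_rcons inE xu orbT => /(_ isT).
  rewrite -cats1 count_cat /= addn0.
  case Exy: (y == x); first by move/eqP: Exy => <-; rewrite yv !orbT.
  by rewrite addn0 => /or4P [->|->|/sv ->|->]; rewrite ?orbT.
have [yv3|yv3] := boolP (y \in v3).
  have -> : v1 ++ a :: u ++ y :: a :: v3 = (v1 ++ a :: u) ++ y :: a :: v3
    by rewrite -catA.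
  rewrite -Lins ?mem_cat ?inE ?eqxx ?orbT // -catA /=.
  rewrite IH; last by apply: Hu; [rewrite inE eqxx | move=> z zv; rewrite !inE zv !orbT].
  by rewrite catA Lins ?mem_cat ?Ha // -catA.
have yp : y \in v1 ++ a :: u.
  move: Hy; rewrite (negbTE yv3) /= mem_cat inE.
  case/or3P => [->|->|] //; rewrite ?orbT //.
  rewrite -cats1 count_cat /= eqxx ?addn0 addn1 ltnS -has_count has_pred1.
  by move=> ->; rewrite !orbT.
have -> : v1 ++ a :: u ++ y :: a :: v3 = (v1 ++ a :: u) ++ y :: a :: v3
  by rewrite -catA.
rewrite -(Lswap _ _ _ _ _ yp); last by rewrite mem_cat inE eqxx orbT.
rewrite -catA /=.
rewrite IH; last by apply: Hu; [rewrite inE eqxx | move=> z zv; rewrite !inE zv !orbT].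
rewrite catA Lswap -?catA //; first by rewrite mem_cat Ha.
move: yp; rewrite !mem_cat inE; case/or3P => [->|/eqP->|->]; by rewrite ?Ha ?orbT.
Qed.

End S.

Theorem lemma3p3 (v1 v2 v3 : word) (a : nat) :
  a \in v1 ->
  (forall x, x \in v2 -> 2 <= count_mem x (v1 ++ a :: v2 ++ a :: v3)) ->
  O_satisfies (v1 ++ a :: v2 ++ a :: v3) (v1 ++ v2 ++ a :: v3).
Proof.
move=> Ha H M HO f; apply: mainL => // x /H.
rewrite !count_cat /= count_cat /=.
case: (boolP (x \in v1)) => //= /count_memPn ->.
case: (a =P x) => [->|_]; first by rewrite eqxx.
rewrite /=; case: (x == a) => //=.
case: (boolP (x \in v3)) => [xv|/count_memPn ->]; first by move=> _; apply/orP; left.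
by rewrite /= !add0n addn0.
Qed.
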